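(* If an $n$-agent network is $k$-redundant and $\bigcap_{i=1}^n\ker A_i=\{0\}$, then for any subset $\mathcal S\subset\mathcal V$ with $|\mathcal S|\ge n-k$, $\bigcap_{i\in\mathcal S}\ker A_i=\{0\}$.
   Context: An $n$-agent network: agents $\mathcal V=\{1,\dots,n\}$, each agent $i$ having real matrices $A_i\in\mathbb R^{r_i\times d}$, $b_i\in\mathbb R^{r_i}$. The network is $k$-redundant ($k\in\{0,1,\dots,n-1\}$) if for any $\mathcal S_1,\mathcal S_2\subset\mathcal V$ with $|\mathcal S_1|=|\mathcal S_2|=n-k$, $\arg\min_x\sum_{i\in\mathcal S_1}\|A_ix-b_i\|_2^2=\arg\min_x\sum_{i\in\mathcal S_2}\|A_ix-b_i\|_2^2$. *)

(* Defs.v *)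
From HB Require Import structures.
From mathcomp Require Import all_boot all_order all_algebra.
From mathcomp Require Import reals.
Set Implicit Arguments. Unset Strict Implicit. Unset Printing Implicit Defensive.
Import Order.TTheory GRing.Theory Num.Theory.
Local Open Scope ring_scope.

Definition sqnorm (R : realType) (m : nat) (v : 'cV[R]_m) : R :=
  \sum_(j < m) (v j 0) ^+ 2.

Definition cost (R : realType) (n d : nat) (r : 'I_n -> nat)
  (A : forall i : 'I_n, 'M[R]_(r i, d)) (b : forall i : 'I_n, 'cV[R]_(r i))
  (S : {set 'I_n}) (x : 'cV[R]_d) : R :=
  \sum_(i in S) sqnorm (A i *m x - b i).

Definition argmin_set (R : realType) (n d : nat) (r : 'I_n -> nat)
  (A : forall i : 'I_n, 'M[R]_(r i, d)) (b : forall i : 'I_n, 'cV[R]_(r i))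
  (S : {set 'I_n}) (x : 'cV[R]_d) : Prop :=
  forall y : 'cV[R]_d, cost A b S x <= cost A b S y.

Definition k_redundant (R : realType) (n d : nat) (r : 'I_n -> nat)
  (A : forall i : 'I_n, 'M[R]_(r i, d)) (b : forall i : 'I_n, 'cV[R]_(r i))
  (k : nat) : Prop :=
  forall S1 S2 : {set 'I_n}, #|S1| = (n - k)%N -> #|S2| = (n - k)%N ->
    forall x : 'cV[R]_d, argmin_set A b S1 x <-> argmin_set A b S2 x.

Definition trivial_common_kernel (R : realType) (n d : nat) (r : 'I_n -> nat)
  (A : forall i : 'I_n, 'M[R]_(r i, d)) (S : {set 'I_n}) : Prop :=
  forall x : 'cV[R]_d, (forall i, i \in S -> A i *m x = 0) -> x = 0.

(* Main.v *)
Require Import Defs.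
From HB Require Import structures.
From mathcomp Require Import all_boot all_order all_algebra.
From mathcomp Require Import reals.
From mathcomp Require Import lra ring zify.
Set Implicit Arguments. Unset Strict Implicit. Unset Printing Implicit Defensive.
Import Order.TTheory GRing.Theory Num.Theory.
Local Open Scope ring_scope.

Lemma subset_card (T : finType) (A : {set T}) (m : nat) :
  (m <= #|A|)%N -> exists B : {set T}, B \subset A /\ #|B| = m.
Proof.
move=> /card_geqP [s [us ss sA]].
exists [set x in s]; split.
  by apply/subsetP=> x; rewrite inE => /sA.
by rewrite cardsE; move/card_uniqP: us => ->.
Qed.

Section S.
Variable R : realType.

Lemma sqnorm_ge0 m (v : 'cV[R]_m) : 0 <= sqnorm v.
Proof. by apply: sumr_ge0 => j _; rewrite sqr_ge0. Qed.

Lemma sqnorm_eq0 m (v : 'cV[R]_m) : sqnorm v = 0 -> v = 0.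
Proof.
move=> h; apply/matrixP => j k; rewrite (ord1 k) [RHS]mxE.
have := psumr_eq0P (fun j _ => sqr_ge0 (v j 0)) h (isT : j \in predT).
by move=> hj; have /eqP := hj j; rewrite sqrf_eq0 => /eqP.
Qed.

Lemma sqnorm_par m (a c : 'cV[R]_m) :
  sqnorm (a + c) + sqnorm (a - c) = 2 * sqnorm a + 2 * sqnorm c.
Proof.
rewrite /sqnorm -big_split /= !mulr_sumr -big_split /=.
by apply: eq_bigr => j _; rewrite !mxE; ring.
Qed.

Lemma sqnormD m (a c : 'cV[R]_m) :
  sqnorm (a + c) = sqnorm a + 2 * (a^T *m c) 0 0 + sqnorm c.
Proof.
rewrite /sqnorm mxE mulr_sumr -!big_split /=.
by apply: eq_bigr => j _; rewrite !mxE; ring.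
Qed.

Lemma sqnormE m (a : 'cV[R]_m) : sqnorm a = (a^T *m a) 0 0.
Proof. by rewrite /sqnorm mxE; apply: eq_bigr => j _; rewrite !mxE expr2. Qed.

End S.

Section Main.
Variables (R : realType) (n d : nat) (r : 'I_n -> nat).
Variables (A : forall i : 'I_n, 'M[R]_(r i, d)) (b : forall i : 'I_n, 'cV[R]_(r i)).

Lemma cost_shift (S : {set 'I_n}) (z v : 'cV[R]_d) :
  cost A b S (z + v) = cost A b S z
    + 2 * ((\sum_(i in S) (A i *m z - b i)^T *m A i) *m v) 0 0
    + \sum_(i in S) sqnorm (A i *m v).
Proof.
rewrite /cost mulmx_suml summxE mulr_sumr -!big_split /=.
apply: eq_bigr => i _.
by rewrite mulmxDr (addrAC (A i *m z)) sqnormD mulmxA addrAC.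
Qed.

Lemma exists_min (S : {set 'I_n}) : exists z, argmin_set A b S z.
Proof.
set G := \sum_(i in S) (A i)^T *m A i.
set hr := \sum_(i in S) (b i)^T *m A i.
have kern : forall v : 'cV[R]_d, G *m v = 0 -> forall i, i \in S -> A i *m v = 0.
  move=> v Gv.
  have h0 : \sum_(i in S) sqnorm (A i *m v) = 0.
    have -> : \sum_(i in S) sqnorm (A i *m v) = (v^T *m G *m v) 0 0.
      rewrite mulmx_sumr mulmx_suml summxE; apply: eq_bigr => i _.
      by rewrite sqnormE trmx_mul !mulmxA.
    by rewrite -mulmxA Gv mulmx0 mxE.
  move=> i iS; apply: sqnorm_eq0.
  exact: (psumr_eq0P (fun i _ => sqnorm_ge0 (A i *m v)) h0 iS).
have hrK : hr *m cokermx G = 0.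
  apply/matrixP => i j.
  have hv : G *m col j (cokermx G) = 0 by rewrite colE mulmxA mulmx_coker mul0mx.
  have : hr *m col j (cokermx G) = 0.
    rewrite mulmx_suml; apply: big1 => k kS.
    by rewrite -mulmxA (kern _ hv k kS) mulmx0.
  have e : col j (hr *m cokermx G) = hr *m col j (cokermx G).
    by rewrite !colE -mulmxA.
  move=> h; have -> : (hr *m cokermx G) i j = col j (hr *m cokermx G) i 0 by rewrite [RHS]mxE.
  by rewrite e h !mxE.
have : (hr <= G)%MS by rewrite submxE hrK.
move/submxP => [w hw].
exists w^T => y.
rewrite -(subrK w^T y) addrC cost_shift.
have -> : \sum_(i in S) (A i *m w^T - b i)^T *m A i = 0.
  rewrite (eq_bigr (fun i => w *m ((A i)^T *m A i) - (b i)^T *m A i)); last first.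
    by move=> i _; rewrite raddfB /= trmx_mul trmxK mulmxBl mulmxA.
  by rewrite sumrB -mulmx_sumr -/G -/hr hw subrr.
rewrite mul0mx mxE mulr0 addr0 lerDl.
by apply: sumr_ge0 => i _; apply: sqnorm_ge0.
Qed.

End Main.

Theorem lemma4 (R : realType) (n d : nat) (r : 'I_n -> nat)
  (A : forall i : 'I_n, 'M[R]_(r i, d)) (b : forall i : 'I_n, 'cV[R]_(r i))
  (k : nat) :
  (k < n)%N ->
  k_redundant A b k ->
  trivial_common_kernel A [set: 'I_n] ->
  forall S : {set 'I_n}, (n - k <= #|S|)%N -> trivial_common_kernel A S.
Proof.
move=> kn red full S hS x hx.
have [S1 [S1S cS1]] := subset_card hS.
have [z hz] := exists_min A b S1.
have kerS1 : forall i, i \in S1 -> A i *m x = 0.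
  by move=> i iS; apply: hx; apply: (subsetP S1S).
have costS1 : forall t : R, cost A b S1 (z + t *: x) = cost A b S1 z.
  move=> t; rewrite /cost; apply: eq_bigr => i iS.
  by rewrite mulmxDr -scalemxAr kerS1 // scaler0 addr0.
have minS1 : forall t, argmin_set A b S1 (z + t *: x).
  by move=> t y; rewrite costS1; exact: hz.
apply: full => i _.
have [B [Bsub cB]] := @subset_card _ [set~ i] (n - k).-1
  ltac:(rewrite cardsC1 card_ord; lia).
set S2 := i |: B.
have iB : i \notin B.
  by apply/negP => /(subsetP Bsub); rewrite !inE eqxx.
have cS2 : #|S2| = (n - k)%N by rewrite cardsU1 iB cB; lia.
have m2 : forall t, argmin_set A b S2 (z + t *: x).
  by move=> t; apply: (proj1 (red S1 S2 cS1 cS2 _)).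
have m0 : argmin_set A b S2 z by have := m2 0; rewrite scale0r addr0.
have eqt : forall t, cost A b S2 (z + t *: x) = cost A b S2 z.
  by move=> t; apply/eqP; rewrite eq_le m2 m0.
have par : cost A b S2 (z + x) + cost A b S2 (z - x)
    = 2 * cost A b S2 z + 2 * \sum_(j in S2) sqnorm (A j *m x).
  rewrite /cost -big_split !mulr_sumr -big_split /=; apply: eq_bigr => j _.
  rewrite mulmxDr mulmxBr (addrAC (A j *m z) (A j *m x)).
  by rewrite (addrAC (A j *m z) (- (A j *m x))) sqnorm_par.
have e1 := eqt 1; have e2 := eqt (-1).
rewrite scale1r in e1; rewrite scaleN1r in e2.
have Q0 : \sum_(j in S2) sqnorm (A j *m x) = 0.
  move: par; rewrite e1 e2 => par.
  have : 2 * \sum_(j in S2) sqnorm (A j *m x) = 0 by lra.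
  by move/eqP; rewrite mulf_eq0 pnatr_eq0 orFb => /eqP.
apply: sqnorm_eq0.
exact: (psumr_eq0P (fun j _ => sqnorm_ge0 (A j *m x)) Q0 (setU11 i B)).
Qed.
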